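(* Let $A$ be a selfadjoint operator on a separable infinite-dimensional Hilbert space $\mathcal{H}$, and let $\mathcal{L}$ be either an $A$-regular Galerkin sequence or, if $A\ge0$, an $A^{1/2}$-regular Galerkin sequence. Let $\lambda\in\mathbb{R}$, $n_k\to\infty$, and $x_k\in\mathcal{L}_{n_k}$ with $\|x_k\|=1$, $x_k\rightharpoonup x$ weakly in $\mathcal{H}$ and $\pi_{n_k}(A-\lambda)x_k\to0$. Then $x\in\operatorname{Ker}(A-\lambda)$.
   Context: A sequence $\mathcal{L}=(\mathcal{L}_n)$ of finite-dimensional subspaces $\mathcal{L}_n\subset\operatorname{D}(A)$ is $A$-regular if for every $f\in\operatorname{D}(A)$ there exist $f_n\in\mathcal{L}_n$ with $\|f_n-f\|+\|Af_n-Af\|\to0$; then $A_n=\pi_nA|_{\mathcal{L}_n}$, $\pi_n$ the orthogonal projection onto $\mathcal{L}_n$. If $A\ge0$, finite-dimensional $\mathcal{L}_n\subset\operatorname{D}(A^{1/2})$ form an $A^{1/2}$-regular sequence if every $f\in\operatorname{D}(A^{1/2})$ is the limit of some $f_n\in\mathcal{L}_n$ in the norm $\|\cdot\|+\|A^{1/2}\cdot\|$; then $A_n:\mathcal{L}_n\to\mathcal{L}_n$ is defined by $\langle y,A_nx\rangle=\langle A^{1/2}y,A^{1/2}x\rangle$. In both cases $\pi_n(A-\lambda)x:=A_nx-\lambda x$ for $x\in\mathcal{L}_n$. *)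

(* Defs.v *)
From HB Require Import structures.
From mathcomp Require Import all_boot all_order all_algebra.
From mathcomp Require Import reals.
From mathcomp Require Import complex.
Set Implicit Arguments. Unset Strict Implicit. Unset Printing Implicit Defensive.
Import Order.TTheory GRing.Theory Num.Theory.
Local Open Scope ring_scope.

Section HilbertDefs.
Variable R : realType.
Local Notation C := R[i].
Variable V : lmodType C.
(* inner product: conjugate-linear in the first, linear in the second argument *)
Variable inner : V -> V -> C.

Definition hnorm (x : V) : R := Num.sqrt (complex.Re (inner x x)).

Definition cmod (z : C) : R := Num.sqrt (complex.Re z ^+ 2 + complex.Im z ^+ 2).

Definition is_inner_product : Prop :=
  [/\ (forall x y z : V, forall a : C, inner x (a *: y + z) = a * inner x y + inner x z),
      (forall x y : V, inner y x = conjc (inner x y)),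
      (forall x : V, 0 <= complex.Re (inner x x)) &
      (forall x : V, inner x x = 0 -> x = 0)].

Definition hconverges (u : nat -> V) (v : V) : Prop :=
  forall e : R, 0 < e -> exists N, forall k, (N <= k)%N -> hnorm (u k - v) < e.

Definition rconverges (u : nat -> R) (l : R) : Prop :=
  forall e : R, 0 < e -> exists N, forall k, (N <= k)%N -> `|u k - l| < e.

Definition cconverges (u : nat -> C) (l : C) : Prop :=
  forall e : R, 0 < e -> exists N, forall k, (N <= k)%N -> cmod (u k - l) < e.

Definition hcauchy (u : nat -> V) : Prop :=
  forall e : R, 0 < e -> exists N, forall k l, (N <= k)%N -> (N <= l)%N ->
    hnorm (u k - u l) < e.

Definition weakly_converges (u : nat -> V) (v : V) : Prop :=
  forall y : V, cconverges (fun k => inner y (u k)) (inner y v).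

Definition span (s : seq V) (x : V) : Prop :=
  exists c : 'I_(size s) -> C, x = \sum_(i < size s) c i *: nth 0 s i.

Definition is_fd_subspace (S : V -> Prop) : Prop :=
  exists s : seq V, forall x, S x <-> span s x.

Definition infinite_dimensional : Prop :=
  forall s : seq V, exists x, ~ span s x.

Definition separable : Prop :=
  exists d : nat -> V, forall x e, 0 < e -> exists i, hnorm (x - d i) < e.

Definition complete : Prop :=
  forall u, hcauchy u -> exists v, hconverges u v.

Definition is_sep_inf_hilbert : Prop :=
  [/\ is_inner_product, complete, separable & infinite_dimensional].

(* (possibly unbounded) operators: a domain D and an action A (irrelevant off D) *)
Definition is_subspace (D : V -> Prop) : Prop :=
  D 0 /\ forall a x y, D x -> D y -> D (a *: x + y).

Definition dense (D : V -> Prop) : Prop :=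
  forall x e, 0 < e -> exists y, D y /\ hnorm (x - y) < e.

(* selfadjoint: densely defined, symmetric, and D(A^* ) is contained in D(A) *)
Definition selfadjoint (D : V -> Prop) (A : V -> V) : Prop :=
  [/\ is_subspace D, dense D,
      (forall x y, D x -> D y -> inner (A x) y = inner x (A y))
    & (forall y z, (forall x, D x -> inner (A x) y = inner x z) -> D y)].

Definition nonneg_op (D : V -> Prop) (A : V -> V) : Prop :=
  forall x, D x -> 0 <= complex.Re (inner x (A x)).

(* (DB, B) is the nonnegative selfadjoint square root of (D, A):
   B >= 0 selfadjoint and B^2 = A, with D(B^2) = {x in D(B) | B x in D(B)}.
   (Such B exists and is unique when A >= 0 is selfadjoint.) *)
Definition is_sqrt_op (D : V -> Prop) (A : V -> V) (DB : V -> Prop) (B : V -> V) : Prop :=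
  [/\ selfadjoint DB B, nonneg_op DB B,
      (forall x, D x <-> (DB x /\ DB (B x)))
    & (forall x, D x -> A x = B (B x))].

Definition regular_seq (DT : V -> Prop) (T : V -> V) (L : nat -> V -> Prop) : Prop :=
  [/\ (forall n, is_fd_subspace (L n)),
      (forall n x, L n x -> DT x)
    & (forall f, DT f -> exists fn : nat -> V, (forall n, L n (fn n)) /\
          rconverges (fun n => hnorm (fn n - f) + hnorm (T (fn n) - T f)) 0)].

Definition is_orth_proj (S : V -> Prop) (x p : V) : Prop :=
  S p /\ forall y, S y -> inner y (x - p) = 0.

(* z = A_n x for the Galerkin sequence in the A-regular case: A_n = pi_n A|_{L_n} *)
Definition galerkin_A (Ln : V -> Prop) (A : V -> V) (x z : V) : Prop :=
  is_orth_proj Ln (A x) z.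

(* z = A_n x in the A^{1/2}-regular case: <y, A_n x> = <B y, B x> for y in L_n *)
Definition galerkin_form (Ln : V -> Prop) (B : V -> V) (x z : V) : Prop :=
  Ln z /\ forall y, Ln y -> inner y z = inner (B y) (B x).

End HilbertDefs.

(* Main.v *)
Require Import Defs.
From HB Require Import structures.
From mathcomp Require Import all_boot all_order all_algebra.
From mathcomp Require Import reals complex.
From mathcomp Require Import ring lra.
Import Order.TTheory GRing.Theory Num.Theory.
Local Open Scope ring_scope.

Section Aux.
Variable R : realType.
Local Notation C := R[i].

Lemma cmodE (z : C) : cmod z = Normc.normc z.
Proof. by case: z. Qed.

Lemma cmod_ge0 (z : C) : 0 <= cmod z.
Proof. exact: sqrtr_ge0. Qed.

Lemma cmodD (u v : C) : cmod (u + v) <= cmod u + cmod v.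
Proof. rewrite !cmodE; exact: le_normcD. Qed.

Lemma cmodM (u v : C) : cmod (u * v) = cmod u * cmod v.
Proof. rewrite !cmodE; exact: Normc.normcM. Qed.

Lemma cmodN (u : C) : cmod (- u) = cmod u.
Proof. rewrite !cmodE; exact: normcN. Qed.

Lemma cmod_eq0 (u : C) : cmod u = 0 -> u = 0.
Proof. rewrite cmodE; exact: Normc.eq0_normc. Qed.

Lemma cmodR (a : R) : cmod (a%:C)%C = `|a|.
Proof. by rewrite /cmod /= expr0n /= addr0 sqrtr_sqr. Qed.

Lemma Re_le_cmod (u : C) : complex.Re u <= cmod u.
Proof.
case: u => a b; rewrite /cmod /=.
case: (boolP (a <= 0)) => a0; first by apply: le_trans a0 (sqrtr_ge0 _).
rewrite -ltNge in a0.
rewrite -[X in X <= _](@ger0_norm _ a (ltW a0)) -sqrtr_sqr.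
by rewrite ler_wsqrtr // lerDl sqr_ge0.
Qed.


Variable V : lmodType C.
Variable inner : V -> V -> C.
Hypothesis Hip : is_inner_product inner.

Lemma ipDZ x y z a : inner x (a *: y + z) = a * inner x y + inner x z.
Proof. by case: Hip => H _ _ _; apply: H. Qed.
Lemma ipC x y : inner y x = conjc (inner x y).
Proof. by case: Hip => _ H _ _; apply: H. Qed.
Lemma ip_pos x : 0 <= complex.Re (inner x x).
Proof. by case: Hip => _ _ H _; apply: H. Qed.
Lemma ip_def x : inner x x = 0 -> x = 0.
Proof. by case: Hip => _ _ _ H; apply: H. Qed.

Lemma ipx0 x : inner x 0 = 0.
Proof.
have := ipDZ x 0 0 1; rewrite scale1r addr0 mul1r => H.
by apply: (addrI (inner x 0)); rewrite addr0 -H.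
Qed.
Lemma ipZ x y a : inner x (a *: y) = a * inner x y.
Proof. by have := ipDZ x y 0 a; rewrite addr0 ipx0 addr0. Qed.
Lemma ipD x y z : inner x (y + z) = inner x y + inner x z.
Proof. by have := ipDZ x y z 1; rewrite scale1r mul1r. Qed.
Lemma ipN x y : inner x (- y) = - inner x y.
Proof. by rewrite -scaleN1r ipZ mulN1r. Qed.
Lemma ipB x y z : inner x (y - z) = inner x y - inner x z.
Proof. by rewrite ipD ipN. Qed.
Lemma ip0x y : inner 0 y = 0.
Proof. by rewrite ipC ipx0 conjc0. Qed.
Lemma ipDl x y z : inner (x + y) z = inner x z + inner y z.
Proof. by rewrite ipC ipD rmorphD /= -!ipC. Qed.
Lemma ipZl x y a : inner (a *: x) y = conjc a * inner x y.
Proof. by rewrite ipC ipZ rmorphM /= -ipC. Qed.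
Lemma ipNl x y : inner (- x) y = - inner x y.
Proof. by rewrite ipC ipN rmorphN /= -ipC. Qed.
Lemma ipBl x y z : inner (x - y) z = inner x z - inner y z.
Proof. by rewrite ipDl ipNl. Qed.

Lemma ip_Im x : complex.Im (inner x x) = 0.
Proof.
have := ipC x x; case: (inner x x) => a b /= [] /eqP.
by rewrite -subr_eq0 opprK -mulr2n mulrn_eq0 /= => /eqP.
Qed.

Lemma ip_real x : inner x x = ((complex.Re (inner x x))%:C)%C.
Proof. by have := ip_Im x; case: (inner x x) => a b /= ->. Qed.

Definition hn x := hnorm inner x.

Lemma hn_ge0 x : 0 <= hn x.
Proof. exact: sqrtr_ge0. Qed.

Lemma hn_sqr x : hn x ^+ 2 = complex.Re (inner x x).
Proof. by rewrite /hn /hnorm sqr_sqrtr // ip_pos. Qed.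

Lemma CS x y : cmod (inner x y) <= hn x * hn y.
Proof.
have [ar0|arp] := eqVneq (complex.Re (inner x x)) 0.
  have x0 : x = 0 by apply: ip_def; rewrite ip_real ar0.
  by rewrite x0 ip0x (cmodR 0) normr0 mulr_ge0 ?hn_ge0.
have arpos : 0 < complex.Re (inner x x) by rewrite lt_def arp ip_pos.
set ar := complex.Re (inner x x) in arp arpos.
have := ip_pos (y - (((ar^-1)%:C)%C * inner x y) *: x).
rewrite ipBl ipZl !ipB !ipZ (ipC x y) (ip_real x) (ip_real y) -/ar.

have cr0 : 0 <= complex.Re (inner y y) := ip_pos y.
rewrite /hn /hnorm -/ar.
move: (complex.Re (inner y y)) cr0 (inner x y) => cr cr0 [b1 b2].
rewrite /cmod /= => H.
rewrite -(sqrtrM _ (ltW arpos)) ler_sqrt ?mulr_ge0 ?(ltW arpos) //.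
have hv : ar^-1 * ar = 1 by rewrite mulVf.
move: (ar^-1) hv H => v hv H.
have e1 : v * b1 * ar = b1 by rewrite -mulrA (mulrC b1) mulrA hv mul1r.
have e2 : v * b2 * ar = b2 by rewrite -mulrA (mulrC b2) mulrA hv mul1r.
rewrite !mul0r !subr0 !addr0 !mulr0 !subr0 e1 e2 !subrr ?mulr0 ?oppr0 ?mulr0 ?subr0 ?add0r ?subrr ?mulr0 ?subr0 in H.
rewrite oppr0 subr0 in H.
have H2 : 0 <= ar * (cr - (v * b1 * b1 - v * b2 * - b2)) by apply: mulr_ge0 => //; exact: ltW.
have E : ar * (cr - (v * b1 * b1 - v * b2 * - b2)) = ar * cr - (v * ar) * (b1 ^+ 2 + b2 ^+ 2) by ring.
rewrite E hv mul1r subr_ge0 in H2; exact: H2.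
Qed.

Definition csmall (w : nat -> C) :=
  forall e : R, 0 < e -> exists N, forall k, (N <= k)%N -> cmod (w k) < e.
Definition rsmall (s : nat -> R) :=
  forall e : R, 0 < e -> exists N, forall k, (N <= k)%N -> s k < e.

Lemma csmall_ext u v : (forall k, u k = v k) -> csmall u -> csmall v.
Proof. move=> E H e /H [N HN]; exists N => k /HN; by rewrite E. Qed.

Lemma csmallD {u v} : csmall u -> csmall v -> csmall (fun k => u k + v k).
Proof.
move=> Hu Hv e e0.
have e2 : 0 < e / 2 by rewrite divr_gt0.
have [N1 H1] := Hu _ e2; have [N2 H2] := Hv _ e2.
exists (maxn N1 N2) => k; rewrite geq_max => /andP[k1 k2].
apply: le_lt_trans (cmodD _ _) _.
have := H1 _ k1; have := H2 _ k2; lra.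
Qed.

Lemma csmallZ a {u} : csmall u -> csmall (fun k => a * u k).
Proof.
move=> Hu e e0.
have ea : 0 < e / (cmod a + 1) by rewrite divr_gt0 // ltr_wpDl ?cmod_ge0.
have [N HN] := Hu _ ea; exists N => k /HN Hk.
rewrite cmodM.
have ca := cmod_ge0 a; have cu := cmod_ge0 (u k).
have E : e / (cmod a + 1) * (cmod a + 1) = e by field; lra.
apply: (@le_lt_trans _ _ ((cmod a + 1) * cmod (u k))); first by nra.
rewrite -E mulrC ltr_pM2r //; lra.
Qed.

Lemma csmall_bnd (w : nat -> C) (s t : nat -> R) :
  (exists M N, forall k, (N <= k)%N -> 0 <= s k <= M) ->
  (forall k, 0 <= t k) -> rsmall t ->
  (forall k, cmod (w k) <= s k * t k) -> csmall w.
Proof.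
move=> [M [N0 HM]] t0 Ht Hw e e0.
have M0 : 0 <= M by have /andP[a b] := HM N0 (leqnn _); exact: le_trans b.
have ea : 0 < e / (M + 1) by rewrite divr_gt0 // ltr_wpDl.
have [N HN] := Ht _ ea; exists (maxn N N0) => k; rewrite geq_max => /andP[k1 k2].
have /andP[s0 sM] := HM _ k2; have tk := HN _ k1; have t0k := t0 k.
have E : e / (M + 1) * (M + 1) = e by field; lra.
apply: le_lt_trans (Hw k) _.
apply: (@le_lt_trans _ _ ((M + 1) * t k)); first by nra.
rewrite -E mulrC ltr_pM2r //; lra.
Qed.

Lemma csmall_const c : csmall (fun _ => c) -> c = 0.
Proof.
move=> H; apply: cmod_eq0; apply/eqP; rewrite eq_le cmod_ge0 andbT.
apply/ler_addgt0Pr => e e0; have [N HN] := H _ e0; rewrite add0r.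
exact: ltW (HN N (leqnn _)).
Qed.

Lemma q0 (q h : R) : 0 <= q -> 0 <= h -> (forall e, 0 < e -> q <= e * h) -> q = 0.
Proof.
move=> q0 h0 H; apply/eqP; rewrite eq_le q0 andbT; rewrite leNgt; apply/negP => qp.
have e0 : 0 < q / (2 * (h + 1)) by rewrite divr_gt0 // mulr_gt0 // ltr_wpDl.
have := H _ e0.
have E : q / (2 * (h + 1)) * (h + 1) = q / 2 by field; lra.
have : q / (2 * (h + 1)) * h <= q / (2 * (h + 1)) * (h + 1) by apply: ler_wpM2l; [exact: ltW | lra].
rewrite E; lra.
Qed.


Lemma final_step (D : V -> Prop) (A : V -> V) x0 (z : V) :
  selfadjoint inner D A ->
  (forall f, D f -> inner (A f) x0 = inner f z) -> D x0 /\ A x0 = z.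
Proof.
case=> _ Hd Hs Hadj H.
have Dx0 : D x0 by apply: Hadj H.
split => //.
set w := A x0 - z.
have Hw : forall f, D f -> inner f w = 0.
  by move=> f Df; rewrite /w ipB -Hs // H // subrr.
suff : w = 0 by move/eqP; rewrite subr_eq0 => /eqP.
clearbody w.
apply: ip_def; apply: cmod_eq0.
apply: (@q0 _ (hn w)); [exact: cmod_ge0 | exact: hn_ge0 |] => e e0.
have [y [Dy Hy]] := Hd w e e0.
have -> : inner w w = inner (w - y) w by rewrite ipBl (Hw y Dy) subr0.
apply: le_trans (CS _ _) _.
by apply: ler_wpM2r; [exact: hn_ge0 | exact: ltW].
Qed.


Lemma rsmall_bnd s : rsmall s -> (forall k, 0 <= s k) ->
  exists M N, forall k, (N <= k)%N -> 0 <= s k <= M.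
Proof.
move=> H s0; have [N HN] := H 1 ltr01; exists 1, N => k /HN Hk.
by rewrite s0 ltW.
Qed.

Lemma const_bnd (c : R) : 0 <= c -> exists M N, forall k : nat, (N <= k)%N -> 0 <= (fun _ => c) k <= M.
Proof. by move=> c0; exists c, 0%N => k _; rewrite c0 lexx. Qed.

Lemma key (Af f x0 : V) (x r g p q : nat -> V) (lam : R) :
  weakly_converges inner x x0 -> (forall k, hn (x k) = 1) ->
  rsmall (fun k => hn (r k)) -> rsmall (fun k => hn (g k - f)) ->
  rsmall (fun k => hn (p k)) ->
  (exists M N, forall k, (N <= k)%N -> 0 <= hn (q k) <= M) ->
  (forall k, inner Af (x k) = inner (g k) (r k) + (lam%:C)%C * inner (g k) (x k) - inner (p k) (q k)) ->
  inner Af x0 = (lam%:C)%C * inner f x0.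
Proof.
move=> Hw Hx Hr Hg Hp Hq E.
have d1 : csmall (fun k => inner Af (x k) - inner Af x0) by move=> e /(Hw Af).
have d2 : csmall (fun k => inner f (x k) - inner f x0) by move=> e /(Hw f).
have i1 : csmall (fun k => inner f (r k)).
  apply: (@csmall_bnd _ (fun _ => hn f) (fun k => hn (r k))) => //.
  - exact: const_bnd (hn_ge0 _).
  - by move=> k; exact: hn_ge0.
  - by move=> k; exact: CS.
have i2 : csmall (fun k => inner (g k - f) (r k)).
  apply: (@csmall_bnd _ (fun k => hn (g k - f)) (fun k => hn (r k))) => //.
  - apply: rsmall_bnd => // k; exact: hn_ge0.
  - by move=> k; exact: hn_ge0.
  - by move=> k; exact: CS.
have i3 : csmall (fun k => inner (g k - f) (x k)).
  apply: (@csmall_bnd _ (fun k => hn (x k)) (fun k => hn (g k - f))) => //.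
  - by exists 1, 0%N => k _; rewrite Hx ler01 lexx.
  - by move=> k; exact: hn_ge0.
  - by move=> k; rewrite mulrC; exact: CS.
have i4 : csmall (fun k => inner (p k) (q k)).
  apply: (@csmall_bnd _ (fun k => hn (q k)) (fun k => hn (p k))) => //.
  - by move=> k; exact: hn_ge0.
  - by move=> k; rewrite mulrC; exact: CS.
apply/eqP; rewrite -subr_eq0; apply/eqP; apply: csmall_const.
have T := csmallD (csmallD (csmallD (csmallZ (-1) d1) (csmallD i1 i2))
            (csmallD (csmallZ (lam%:C)%C i3) (csmallZ (-1) i4))) (csmallZ (lam%:C)%C d2).
apply: csmall_ext T => k /=.
rewrite !ipBl E; ring.
Qed.


Lemma sub_small (a b : nat -> R) (n : nat -> nat) :
  (forall m, 0 <= a m) -> (forall m, 0 <= b m) ->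
  rconverges (fun m => a m + b m) 0 ->
  (forall M, exists K, forall k, (K <= k)%N -> (M <= n k)%N) ->
  rsmall (fun k => a (n k)) /\ rsmall (fun k => b (n k)).
Proof.
move=> a0 b0 Hc Hn; split=> e e0; have [N HN] := Hc e e0; have [K HK] := Hn N;
  exists K => k /HK /HN; rewrite subr0 ger0_norm ?addr_ge0 //;
  have := a0 (n k); have := b0 (n k); lra.
Qed.

End Aux.
Arguments hn {R V}. Arguments hn_ge0 {R V}. Arguments final_step {R V inner}.
Arguments key {R V inner}. Arguments ipZ {R V inner}. Arguments ipB {R V inner}.
Arguments ipD {R V inner}. Arguments ipBl {R V inner}. Arguments sub_small {R}. Arguments Re_le_cmod {R}. Arguments rsmall {R}. Arguments csmall {R}.
Arguments CS {R V inner}. Arguments ip_real {R V inner}. Arguments hn_sqr {R V inner}.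

Theorem lemma3p2 (R : realType) (V : lmodType R[i]) (inner : V -> V -> R[i])
  (D : V -> Prop) (A : V -> V) (L : nat -> V -> Prop)
  (lam : R) (n : nat -> nat) (x : nat -> V) (x0 : V) (r : nat -> V) :
  is_sep_inf_hilbert inner ->
  selfadjoint inner D A ->
  (* n_k -> oo *)
  (forall M, exists K, forall k, (K <= k)%N -> (M <= n k)%N) ->
  (forall k, L (n k) (x k)) ->
  (forall k, hnorm inner (x k) = 1) ->
  weakly_converges inner x x0 ->
  (* r k = pi_{n_k} (A - lam) x_k := A_{n_k} x_k - lam x_k, in either setting *)
  ((regular_seq inner D A L /\
      forall k, galerkin_A inner (L (n k)) A (x k) (r k + (lam%:C)%C *: x k))
   \/
   (nonneg_op inner D A /\
    exists (DB : V -> Prop) (B : V -> V),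
      is_sqrt_op inner D A DB B /\ regular_seq inner DB B L /\
      forall k, galerkin_form inner (L (n k)) B (x k) (r k + (lam%:C)%C *: x k))) ->
  hconverges inner r 0 ->
  D x0 /\ A x0 = (lam%:C)%C *: x0.
Proof.
move=> [Hip _ _ _] Hsa Hn Lx Hx Hw Hcase Hr.
have Hr' : rsmall (fun k => hn inner (r k)).
  by move=> e /Hr [N HN]; exists N => k /HN; rewrite subr0.
apply: (final_step Hip _ _ _ _ Hsa) => f Df; rewrite (ipZ Hip).
case: Hcase => [[[HL HLD Hreg] Hgal] | [_ [DB [B [[HBsa _ HDeq HAB] [[HL HLD Hreg] Hgal]]]]]].
- have [fn [Lfn Hconv]] := Hreg f Df.
  have [Hg Hp] := sub_small (fun m => hn inner (fn m - f)) (fun m => hn inner (A (fn m) - A f)) n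
     (fun m => hn_ge0 inner (fn m - f)) (fun m => hn_ge0 inner (A (fn m) - A f)) Hconv Hn.
  apply: (key Hip (A f) f x0 x r (fun k => fn (n k)) (fun k => A (fn (n k)) - A f) x lam Hw Hx Hr' Hg Hp).
  - by exists 1, 0%N => k _; rewrite /hn Hx ler01 lexx.
  - move=> k.
    have [_ Horth] := Hgal k.
    have H1 := Horth _ (Lfn (n k)).
    rewrite (ipB Hip) (ipD Hip) (ipZ Hip) in H1.
    case: Hsa => _ _ Hs _.
    have H2 := Hs _ _ (HLD _ _ (Lfn (n k))) (HLD _ _ (Lx k)).
    rewrite (ipBl Hip) H2.
    move/eqP: H1; rewrite subr_eq0 => /eqP ->; ring.
- have [DBf DBBf] := (HDeq f).1 Df.
  have [fn [Lfn Hconv]] := Hreg f DBf.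
  have [Hg Hp] := sub_small (fun m => hn inner (fn m - f)) (fun m => hn inner (B (fn m) - B f)) n
     (fun m => hn_ge0 inner (fn m - f)) (fun m => hn_ge0 inner (B (fn m) - B f)) Hconv Hn.
  case: HBsa => _ _ HBs _.
  apply: (key Hip (A f) f x0 x r (fun k => fn (n k)) (fun k => B (fn (n k)) - B f)
            (fun k => B (x k)) lam Hw Hx Hr' Hg Hp).
  - have [N HN] := Hr' 1 ltr01.
    exists (2 + `|lam|), N => k Hk.
    have [_ Hgf] := Hgal k.
    have H1 := Hgf _ (Lx k).
    have Hsq := hn_sqr Hip (B (x k)).
    have Hxx := hn_sqr Hip (x k); rewrite /hn Hx expr1n in Hxx.
    have Hre := le_trans (Re_le_cmod (inner (x k) (r k))) (CS Hip (x k) (r k)).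
    rewrite /hn Hx mul1r in Hre.
    have Hrk := HN k Hk.
    rewrite -H1 (ipD Hip) (ipZ Hip) (ip_real Hip (x k)) -Hxx in Hsq.
    move: Hsq Hre; case: (inner (x k) (r k)) => u1 u2 /= Hsq Hre.
    rewrite hn_ge0 /=.
    have l1 := ler_norm lam; have l2 := normr_ge0 lam; have h0 := hn_ge0 inner (B (x k)).
    rewrite /hn in Hrk h0 *.
    rewrite /hn mulr1 mulr0 subr0 in Hsq.
    have Hh : hnorm inner (B (x k)) ^+ 2 <= 1 + `|lam| by lra.
    nra.
  - move=> k.
    have [_ Hgf] := Hgal k.
    have H1 := Hgf _ (Lfn (n k)).
    rewrite (ipD Hip) (ipZ Hip) in H1.
    rewrite (HAB _ Df) (HBs _ _ DBBf (HLD _ _ (Lx k))) (ipBl Hip) -H1; ring.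
Qed.
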